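(* Let $V$ be a finite set of variables, let $D_{\mathit{ds}}$ be the causal ABA framework defined in the context, let $\sigma\in\{\text{preferred},\text{stable}\}$, let $S\in\sigma(D_{\mathit{ds}})$ and let $G(S)=(V,\{(u,v)\mid\mathit{arr}_{uv}\in S\})$. Then for all distinct $x,y\in V$ and all $\mathbf Z\subseteq V\setminus\{x,y\}$: $(x\perp\!\!\!\perp y\mid\mathbf Z)\in S$ if and only if $x$ and $y$ are d-separated given $\mathbf Z$ in $G(S)$.
   Context: ABA. An ABA framework is $D=(\mathcal L,\mathcal R,\mathcal A,\overline{\cdot})$ with sentences $\mathcal L$, rules $a_0\leftarrow a_1,\dots,a_n$ ($n\ge0$), assumptions $\mathcal A\subseteq\mathcal L$ and contrary function $\overline{\cdot}:\mathcal A\to\mathcal L$. $S\vdash q$ ($S\subseteq\mathcal A$) if there is a finite rooted labelled tree with root $q$, set of leaf labels $S$ or $S\cup\{\top\}$, and every inner node labelled by the head of a rule whose children are labelled by the distinct body elements (one child $\top$ for an empty body). $S$ attacks $T$ if some $S'\subseteq S$ derives $\overline a$ for some $a\in T$. Conflict-free: does not attack itself; $S$ defends $T$ if it attacks every attacker of $T$; admissible: conflict-free and self-defending; complete: admissible and contains every assumption set it defends; preferred: $\subseteq$-maximal complete; stable: admissible and attacks $\{a\}$ for every assumption $a\notin S$. Graphs. A path in a directed graph is a sequence of distinct nodes with consecutive nodes adjacent; an inner node $x_i$ of a path $x_1\dots x_n$ is a collider if $(x_{i-1},x_i)$ and $(x_{i+1},x_i)$ are edges; $z'$ is a descendant of $z$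 if there is a directed path from $z$ to $z'$. For a DAG $H$ and $\mathbf Z\subseteq V\setminus\{x,y\}$, an $x$-$y$-path is $\mathbf Z$-active if every collider on it is in $\mathbf Z$ or has a descendant in $\mathbf Z$, and every other node on it is not in $\mathbf Z$; $x,y$ are d-separated given $\mathbf Z$ if no $\mathbf Z$-active $x$-$y$-path exists. An $x$-$y$-collider-tree of a DAG $H$ is a subgraph $t$ of $H$ together with an $x$-$y$-path $p_t$ in $t$ such that every node of $t$ not on $p_t$ is a descendant of some collider of $p_t$; it is $\mathbf Z$-active if $p_t$ is $\mathbf Z$-active in the graph $(V,\text{edges of }t)$. The framework $D_{\mathit{ds}}$. Assumptions: $\mathit{arr}_{xy}$ for all ordered pairs of distinct $x,y\in V$; one $\mathit{noe}_{xy}=\mathit{noe}_{yx}$ per unordered pair; and independence assumptions $(x\perp\!\!\!\perp y\mid\mathbf Z)$ for all $\mathbf Z\subseteq V$, distinct $x,y\in V\setminus\mathbf Z$, with $(x\perp\!\!\!\perp y\mid\mathbf Z)$ identified with $(y\perp\!\!\!\perp x\mid\mathbf Z)$. Each assumption $a$ has its own distinct fresh contrary $\overline a$. Rules: (i) $\overline a\leftarrow b$ for distinct $a,b\in\{\mathit{arr}_{xy},\mathit{arr}_{yx},\mathit{noe}_{xy}\}$; (ii) for every sequence $x_1\dots x_k$ with consecutive elements distinct and $x_1=x_k$ and every $1\le i<k$: $\overline{\mathit{arr}_{x_ix_{i+1}}}\leftarrow\mathit{arr}_{x_1x_2},\dots,\mathit{arr}_{x_{k-1}x_k}$; (iii)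 $\mathit{dpath}_{xy}\leftarrow\mathit{arr}_{xy}$; $\mathit{dpath}_{xz}\leftarrow\mathit{dpath}_{xy},\mathit{arr}_{yz}$; $e_{xy}\leftarrow\mathit{arr}_{xy}$; $e_{xy}\leftarrow\mathit{arr}_{yx}$; $\overline{\mathit{noe}_{xy}}\leftarrow e_{xy}$; (iv) for all distinct $x,y$, $\mathbf Z\subseteq V\setminus\{x,y\}$ and every $\mathbf Z$-active $x$-$y$-collider-tree $t$ (of any DAG on $V$), the rule $\overline{(x\perp\!\!\!\perp y\mid\mathbf Z)}\leftarrow\{\mathit{arr}_{uv}\mid(u,v)\text{ an edge of }t\}$. *)

(* Defs.v *)
From Stdlib Require Import Relations.Relation_Operators List.
From mathcomp Require Import all_boot.
Set Implicit Arguments. Unset Strict Implicit. Unset Printing Implicit Defensive.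

Section DDS.
Variable V : finType.

(* Arr x y = arr_xy ; Noe e = noe for the unordered pair e = {x,y} ;
   Ind P Z = (x _||_ y | Z) with P = {x,y}; using the 2-element set P
   realises the identifications noe_xy = noe_yx and (x||y|Z) = (y||x|Z). *)
Inductive asm : Type :=
| Arr of V & V
| Noe of {set V}
| Ind of {set V} & {set V}.

Inductive sent : Type :=
| Asm of asm
| Ctr of asm
| Dpath of V & V
| Edg of V & V.

Definition is_asm (a : asm) : Prop :=
  match a with
  | Arr x y => x <> y
  | Noe e => #|e| = 2
  | Ind P Z => #|P| = 2 /\ [disjoint P & Z]
  end.

Definition adj (E : V -> V -> Prop) (u v : V) : Prop := E u v \/ E v u.

Definition is_path (E : V -> V -> Prop) (p : seq V) (x y : V) : Prop :=
  [/\ (0 < size p)%N, head x p = x, last x p = y, uniq p &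
      forall (l r : seq V) (a b : V), p = l ++ a :: b :: r -> adj E a b].

Definition collider (E : V -> V -> Prop) (a b c : V) : Prop := E a b /\ E c b.

Definition desc (E : V -> V -> Prop) (u v : V) : Prop := clos_refl_trans V E u v.

Definition active (E : V -> V -> Prop) (Z : {set V}) (p : seq V) : Prop :=
  forall (l r : seq V) (a b c : V), p = l ++ a :: b :: c :: r ->
    (collider E a b c -> (b \in Z \/ exists z, z \in Z /\ desc E b z)) /\
    (~ collider E a b c -> b \notin Z).

Definition dsep (E : V -> V -> Prop) (x y : V) (Z : {set V}) : Prop :=
  ~ exists p, is_path E p x y /\ active E Z p.

Definition acyclic (E : V -> V -> Prop) : Prop :=
  forall u v, E u v -> ~ clos_refl_trans V E v u.

Definition set_rel (Et : {set V * V}) (u v : V) : Prop := (u, v) \in Et.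

Definition collider_tree (H : V -> V -> Prop) (x y : V)
    (N : {set V}) (Et : {set V * V}) (p : seq V) : Prop :=
  [/\ forall e, e \in Et -> [/\ H e.1 e.2, e.1 \in N & e.2 \in N],
      is_path (set_rel Et) p x y,
      forall v, v \in p -> v \in N &
      forall w, w \in N -> w \notin p ->
        exists (l r : seq V) (a b c : V),
          [/\ p = l ++ a :: b :: c :: r, collider (set_rel Et) a b c &
              desc (set_rel Et) b w]].

Definition excl_trio (x y : V) : seq asm := [:: Arr x y; Arr y x; Noe [set x; y]].

Inductive rule : sent -> seq sent -> Prop :=
| r_excl x y a b : x != y -> List.In a (excl_trio x y) -> List.In b (excl_trio x y) ->
    a <> b -> rule (Ctr a) [:: Asm b]
| r_cycle (x : V) (s : seq V) (i : nat) :
    path (fun u v => u != v) x s -> last x s = x -> (i < size s)%N ->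
    rule (Ctr (Arr (nth x (x :: s) i) (nth x s i)))
         [seq Asm (Arr q.1 q.2) | q <- zip (x :: s) s]
| r_dpath1 x y : x != y -> rule (Dpath x y) [:: Asm (Arr x y)]
| r_dpath2 x y z : y != z -> rule (Dpath x z) [:: Dpath x y; Asm (Arr y z)]
| r_e1 x y : x != y -> rule (Edg x y) [:: Asm (Arr x y)]
| r_e2 x y : x != y -> rule (Edg x y) [:: Asm (Arr y x)]
| r_noe x y : x != y -> rule (Ctr (Noe [set x; y])) [:: Edg x y]
| r_ind (x y : V) (Z : {set V}) (H : V -> V -> Prop) (N : {set V})
        (Et : {set V * V}) (p : seq V) :
    x != y -> x \notin Z -> y \notin Z -> acyclic H ->
    collider_tree H x y N Et p -> active (set_rel Et) Z p ->
    rule (Ctr (Ind [set x; y] Z)) [seq Asm (Arr e.1 e.2) | e <- enum Et].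

Definition asm_set (S : asm -> Prop) : Prop := forall a, S a -> is_asm a.

(* der S q : q is the root of a finite derivation tree whose assumption leaves
   all lie in S (i.e. S' |- q for some S' included in S). *)
Inductive der (S : asm -> Prop) : sent -> Prop :=
| der_asm a : is_asm a -> S a -> der S (Asm a)
| der_rule h body : rule h body -> (forall b, List.In b body -> der S b) -> der S h.

Definition attacks (S T : asm -> Prop) : Prop :=
  exists a, T a /\ der S (Ctr a).

Definition conflict_free (S : asm -> Prop) : Prop := ~ attacks S S.

Definition defends (S T : asm -> Prop) : Prop :=
  forall U, asm_set U -> attacks U T -> attacks S U.

Definition admissible (S : asm -> Prop) : Prop :=
  [/\ asm_set S, conflict_free S & defends S S].

Definition complete (S : asm -> Prop) : Prop :=
  admissible S /\ forall T, asm_set T -> defends S T -> forall a, T a -> S a.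

Definition preferred (S : asm -> Prop) : Prop :=
  complete S /\
  forall S', complete S' -> (forall a, S a -> S' a) -> forall a, S' a -> S a.

Definition stable (S : asm -> Prop) : Prop :=
  admissible S /\ forall a, is_asm a -> ~ S a -> attacks S (fun b => b = a).

Definition GS (S : asm -> Prop) (u v : V) : Prop := S (Arr u v).

End DDS.

(* Main.v *)
Require Import Defs.
From mathcomp Require Import all_boot.
From Stdlib Require Import ClassicalEpsilon Classical Relations.Relation_Operators Relations.Operators_Properties.
From Stdlib Require List.
From mathcomp Require Import zify.
From Stdlib Require Import Lia.
Set Implicit Arguments. Unset Strict Implicit. Unset Printing Implicit Defensive.

Definition pb (P : Prop) : bool := if excluded_middle_informative P then true else false.
Lemma pbP (P : Prop) : reflect P (pb P).
Proof. rewrite /pb; case: excluded_middle_informative => h; by constructor. Qed.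

Lemma InP (T : eqType) (x : T) (s : seq T) : reflect (List.In x s) (x \in s).
Proof.
elim: s => [|a s IH] /=; first by constructor.
rewrite in_cons; apply: (iffP orP).
- by case=> [/eqP ->|/IH]; [left|right].
- by case=> [->|/IH]; [left; rewrite eqxx|right].
Qed.

Section S.
Variable V : finType.
Implicit Types (S U X : asm V -> Prop).

Lemma der_mono S U q : der S q -> (forall a, S a -> U a) -> der U q.
Proof.
move=> D sub; elim: D => [a ha Sa|h body R _ IH].
- exact: der_asm ha (sub _ Sa).
- exact: (der_rule R).
Qed.

Lemma der_Asm S a : der S (Asm a) -> S a.
Proof.
move E: (Asm a) => q D; case: D E => [b _ Sb [->] //| h body R _ E].
by case: R E.
Qed.

Lemma pair_eq (x y u v : V) : [set x; y] = [set u; v] -> u != v ->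
  (x = u /\ y = v) \/ (x = v /\ y = u).
Proof.
move=> E nuv.
have hx : x \in [set u; v] by rewrite -E !inE eqxx.
have hy : y \in [set u; v] by rewrite -E !inE eqxx orbT.
have hu : u \in [set x; y] by rewrite E !inE eqxx.
have hv : v \in [set x; y] by rewrite E !inE eqxx orbT.
move: hx hy hu hv; rewrite !inE.
case/orP=> /eqP ->; case/orP=> /eqP ->; rewrite ?eqxx ?orbb //=.
- by move=> _ /eqP e; rewrite e eqxx in nuv.
- by left.
- by right.
- by move=> /eqP e; rewrite e eqxx in nuv.
Qed.

Lemma der_Edg S x y : der S (Edg x y) -> S (Arr x y) \/ S (Arr y x).
Proof.
move E: (Edg x y) => q D; case: D E => [b _ _ //| h body R Hb E].
case: R Hb E => //.
- move=> a b _ Hb [-> ->]; left; apply: der_Asm; apply: Hb; by left.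
- move=> a b _ Hb [-> ->]; right; apply: der_Asm; apply: Hb; by left.
Qed.

Lemma der_CtrNoe S e : der S (Ctr (Noe e)) ->
  exists x y, e = [set x; y] /\ S (Arr x y).
Proof.
move E: (Ctr (Noe e)) => q D; case: D E => [b _ _ //| h body R Hb E].
case: R Hb E => //.
- move=> x y a b nxy Ina Inb nab Hb [ea].
  have Sb : S b by apply: der_Asm; apply: Hb; left.
  move: Ina Inb nab Sb; rewrite -ea /=.
  case=> [//|[//|[[<-]|//]]]; case=> [<-|[<-|[<-|//]]] // _.
  + by move=> Sb; exists x, y.
  + by move=> Sb; exists y, x; rewrite setUC.
- move=> x y nxy Hb [->].
  case: (der_Edg (Hb _ (or_introl erefl))) => hh.
  + by exists x, y.
  + by exists y, x; rewrite setUC.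
Qed.

Lemma In_map (A B : Type) (f : A -> B) (s : seq A) b :
  List.In b (map f s) -> exists2 q, List.In q s & b = f q.
Proof.
elim: s => [//|a s IH] /= [<-|/IH [q Hq ->]]; first by exists a; [left|].
by exists q; [right|].
Qed.

Lemma In_map2 (A B : Type) (f : A -> B) (s : seq A) q :
  List.In q s -> List.In (f q) (map f s).
Proof. elim: s => [//|a s IH] /= [->|/IH]; by [left|right]. Qed.

Lemma rule_noCtr h body c : @rule V h body -> List.In (Ctr c) body -> False.
Proof.
move=> R; case: R => /=.
- by move=> x y a b _ _ _ _ [].
- by move=> x s i _ _ _ HH; case: (In_map HH).
- by move=> x y _ [].
- by move=> x y z _ [|[]].
- by move=> x y _ [].
- by move=> x y _ [].
- by move=> x y _ [].
- by move=> x y Z H N Et p _ _ _ _ _ _ HH; case: (In_map HH).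
Qed.

Lemma rule_Noe h body e : @rule V h body -> List.In (Asm (Noe e)) body ->
  exists x y, e = [set x; y] /\ h = Ctr (Arr x y).
Proof.
move=> R; case: R => /=.
- move=> x y a b _ Ina Inb nab [[eb]|//]; rewrite eb in Inb nab.
  move: Ina Inb nab => /=.
  case=> [<-|[<-|[<-|//]]]; case=> [//|[//|[ee|//]]] //; case: ee => <-.
  + by exists x, y.
  + by exists y, x; rewrite setUC.
- by move=> x s i _ _ _ HH; case: (In_map HH).
- by move=> x y _ [].
- by move=> x y z _ [|[]].
- by move=> x y _ [].
- by move=> x y _ [].
- by move=> x y _ [].
- by move=> x y Z H N Et p _ _ _ _ _ _ HH; case: (In_map HH).
Qed.

Section Ext.
Variables (S : asm V -> Prop) (u v : V).
Definition Sn (a : asm V) := S a \/ a = Noe [set u; v].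

Lemma der_Sn q : u != v -> der Sn q ->
  [\/ der S q, q = Asm (Noe [set u; v]), q = Ctr (Arr u v) | q = Ctr (Arr v u)].
Proof.
move=> nuv; elim => [a ha [Sa|->]|h body R _ IH].
- by constructor 1; apply: der_asm.
- by constructor 2.
case: (classic (forall b, List.In b body -> der S b)) => [all|].
  by constructor 1; apply: der_rule R all.
move/not_all_ex_not => [b Hb1]; case: (imply_to_and _ _ Hb1) => Inb nb.
case: (IH b Inb) => [/nb//|eb|eb|eb]; rewrite eb in Inb.
- case: (rule_Noe R Inb) => x [y [exy ->]].
  by case: (pair_eq (esym exy) nuv) => [[-> ->]|[-> ->]]; [constructor 3|constructor 4].
- by case: (rule_noCtr R Inb).
- by case: (rule_noCtr R Inb).
Qed.
End Ext.

Lemma attacks_mono S S' T : attacks S T -> (forall a, S a -> S' a) -> attacks S' T.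
Proof. by case=> a [Ta D] sub; exists a; split => //; apply: der_mono D sub. Qed.

Lemma fundamental X a : admissible X -> is_asm a -> defends X (fun b => b = a) ->
  admissible (fun b => X b \/ b = a).
Proof.
case=> asX cfX dX ha da.
have sub : forall b, X b -> X b \/ b = a by move=> b; left.
have asXa : asm_set (fun b => X b \/ b = a) by move=> b [/asX|->].
split => //.
- move=> att.
  have [b [Hb Db]] := att.
  have XU : attacks X (fun b => X b \/ b = a).
    case: Hb Db => [Xb|->] Db.
    + by apply: dX => //; exists b.
    + by apply: da => //; exists a.
  case: XU => w [[Xw|ew] Dw].
  + by apply: cfX; exists w.
  + apply: cfX; apply: (da X asX); exists a; split => //; by rewrite -ew.
- move=> U asU [b [[Xb|->] Db]].
  + by apply: attacks_mono sub; apply: dX => //; exists b.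
  + by apply: attacks_mono sub; apply: da => //; exists a.
Qed.

Definition T : finType := (((V * V) + {set V}) + ({set V} * {set V}))%type.
Definition dec (t : T) : asm V :=
  match t with
  | inl (inl (x, y)) => Arr x y
  | inl (inr e) => Noe e
  | inr (P, Z) => Ind P Z
  end.
Definition enc (a : asm V) : T :=
  match a with
  | Arr x y => inl (inl (x, y))
  | Noe e => inl (inr e)
  | Ind P Z => inr (P, Z)
  end.
Lemma encK a : dec (enc a) = a. Proof. by case: a. Qed.

Definition sX (X : asm V -> Prop) : {set T} := [set t | pb (X (dec t))].

Lemma complete_sup X : admissible X -> exists Y, complete Y /\ forall a, X a -> Y a.
Proof.
move: {2}(#|T| - #|sX X|) (leqnn (#|T| - #|sX X|)) => n.
elim: n X => [|n IH] X Hn adX;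
  (case: (classic (exists T0 a, [/\ asm_set T0, defends X T0, T0 a & ~ X a])) =>
     [[T0 [a [asT0 dT0 Ta nXa]]]|nex]; last first).
- exists X; split=> //; split=> // T0 asT0 dT0 a Ta.
  by apply: NNPP => nXa; apply: nex; exists T0, a.
- have ha : is_asm a by apply: asT0.
  have da : defends X (fun b => b = a).
    by move=> U asU [b [-> D]]; apply: dT0 => //; exists a.
  have adXa := fundamental adX ha da.
  have pr : sX X \proper sX (fun b => X b \/ b = a).
    apply/properP; split.
      by apply/subsetP => t; rewrite !inE => /pbP Xt; apply/pbP; left.
    exists (enc a); rewrite !inE encK; [by apply/pbP; right|by apply/pbP].
  have := proper_card pr; have := max_card (mem (sX (fun b => X b \/ b = a))).
  move=> h1 h2; exfalso; move: Hn; rewrite leqn0 subn_eq0 => h3.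
  by move: (leq_ltn_trans (leq_trans h1 h3) h2); rewrite ltnn.
- exists X; split=> //; split=> // T0 asT0 dT0 a Ta.
  by apply: NNPP => nXa; apply: nex; exists T0, a.
- have ha : is_asm a by apply: asT0.
  have da : defends X (fun b => b = a).
    by move=> U asU [b [-> D]]; apply: dT0 => //; exists a.
  have adXa := fundamental adX ha da.
  have pr : sX X \proper sX (fun b => X b \/ b = a).
    apply/properP; split.
      by apply/subsetP => t; rewrite !inE => /pbP Xt; apply/pbP; left.
    exists (enc a); rewrite !inE encK; [by apply/pbP; right|by apply/pbP].
  have h2 := proper_card pr; have h1 := max_card (mem (sX (fun b => X b \/ b = a))).
  have Hn' : #|T| - #|sX (fun b => X b \/ b = a)| <= n.
    move: h1 h2 Hn; rewrite /=; lia.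
  have [Y [cY sY]] := IH _ Hn' adXa.
  by exists Y; split => // b Xb; apply: sY; left.
Qed.

Lemma trio S u v : preferred S -> u != v ->
  [\/ S (Arr u v), S (Arr v u) | S (Noe [set u; v])].
Proof.
move=> [[[asS cfS dS] cS] mS] nuv.
apply: NNPP => nt.
have nuvS : ~ S (Arr u v) by move=> h; apply: nt; constructor 1.
have nvuS : ~ S (Arr v u) by move=> h; apply: nt; constructor 2.
have nnS : ~ S (Noe [set u; v]) by move=> h; apply: nt; constructor 3.
have noS : ~ der S (Ctr (Noe [set u; v])).
  case/der_CtrNoe => x [y [exy Sxy]].
  case: (pair_eq (esym exy) nuv) => [[ex ey]|[ex ey]]; [apply: nuvS|apply: nvuS];
    by rewrite -ex -ey.
have adm : admissible (Sn S u v).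
  split.
  - move=> a [/asS //|->] /=; by rewrite cards2 nuv.
  - case=> b [Hb /(der_Sn nuv)].
    case=> [D|//|[eb]|[eb]].
    + case: Hb => [Sb|eb].
      * by apply: cfS; exists b.
      * by apply: noS; rewrite -eb.
    + by case: Hb; rewrite eb.
    + by case: Hb; rewrite eb.
  - move=> U asU [b [[Sb|->] Db]].
    + apply: (attacks_mono (dS U asU _)); first by exists b.
      by move=> a Sa; left.
    + case/der_CtrNoe: Db => x [y [exy Uxy]].
      have nxy : x != y.
        by case: (pair_eq (esym exy) nuv) => [[-> ->]|[-> ->]]; rewrite // eq_sym.
      exists (Arr x y); split => //.
      apply: (@der_rule _ _ _ [:: Asm (Noe [set x; y])]).
        apply: (r_excl nxy); [by left|by right; right; left|by []].
      move=> bb [<-|//]; apply: der_asm; first by rewrite /= cards2 nxy.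
      by rewrite /Sn exy; right.
have [Y [cY sY]] := complete_sup adm.
apply: nnS; apply: (mS Y cY); first by move=> a Sa; apply: sY; left.
by apply: sY; right.
Qed.

Implicit Types (E : V -> V -> Prop).

Lemma walk E a b : clos_refl_trans V E a b ->
  exists s, last a s = b /\ forall q, List.In q (zip (a :: s) s) -> E q.1 q.2.
Proof.
move/clos_rt_rt1n_iff; elim => [c|c d e Ecd _ [s [ls hs]]].
- by exists [::].
- exists (d :: s); split => //= q [<-|] //; exact: hs.
Qed.

Lemma walk_path E a s : (forall w, ~ E w w) ->
  (forall q, List.In q (zip (a :: s) s) -> E q.1 q.2) -> path (fun u v => u != v) a s.
Proof.
move=> irr; elim: s a => [//|b s IH] a /= hs; apply/andP; split.
- by apply/negP => /eqP eab; apply: (irr a); rewrite {2}eab; apply: (hs (a, b)); left.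
- by apply: IH => q Hq; apply: hs; right.
Qed.

Lemma GS_irr S : asm_set S -> forall w, ~ GS S w w.
Proof. by move=> asS w /asS. Qed.

Lemma GS_acyclic S : asm_set S -> conflict_free S -> acyclic (GS S).
Proof.
move=> asS cfS u v Guv /walk [s [ls hs]].
apply: cfS; exists (Arr u v); split => //.
have hs' : forall q, List.In q (zip (u :: v :: s) (v :: s)) -> GS S q.1 q.2.
  by move=> q /= [<-|/hs] //.
have := @r_cycle V u (v :: s) 0 (walk_path (GS_irr asS) hs') ls erefl.
move=> R; apply: (der_rule R) => b Hb; case: (In_map Hb) => q /hs' Gq ->.
by apply: der_asm => //; apply: asS.
Qed.

Lemma rev_split3 (p l r : seq V) a b : rev p = l ++ a :: b :: r ->
  p = rev r ++ b :: a :: rev l.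
Proof.
move=> e; rewrite -(revK p) e rev_cat !rev_cons -cats1 -catA /=.
by rewrite -!cats1 -!catA.
Qed.

Lemma rev_split4 (p l r : seq V) a b c : rev p = l ++ a :: b :: c :: r ->
  p = rev r ++ c :: b :: a :: rev l.
Proof.
move=> e; rewrite -(revK p) e rev_cat !rev_cons -!cats1 -!catA /=.
done.
Qed.

Lemma is_path_rev E p x y : is_path E p x y -> is_path E (rev p) y x.
Proof.
case=> sz hd lt un adjp; split.
- by rewrite size_rev.
- by case/lastP: p sz hd lt {un adjp} => [//|p' z] _ _; rewrite last_rcons rev_rcons.
- by case: p sz hd lt {un adjp} => [//|a p'] _ /= -> _; rewrite rev_cons last_rcons.
- by rewrite rev_uniq.
- move=> l r a b /rev_split3 /adjp [h|h]; by [right|left].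
Qed.

Lemma active_rev E Z p : active E Z p -> active E Z (rev p).
Proof.
move=> act l r a b c /rev_split4 /act [h1 h2]; split.
- by case=> e1 e2; apply: h1.
- by move=> nc; apply: h2 => [[e1 e2]]; apply: nc.
Qed.

Lemma dsep_sym E x y Z : dsep E x y Z -> dsep E y x Z.
Proof.
move=> d [p [hp ha]]; apply: d; exists (rev p); split.
- exact: is_path_rev.
- exact: active_rev.
Qed.

Lemma crt_mono E E' a b : (forall u v, E u v -> E' u v) ->
  clos_refl_trans V E a b -> clos_refl_trans V E' a b.
Proof.
move=> sub; elim => [u v /sub h|u|u v w _ h1 _ h2].
- exact: rt_step.
- exact: rt_refl.
- exact: rt_trans h1 h2.
Qed.

Lemma transfer E (Et : {set V * V}) Z p x y : acyclic E ->
  (forall e, e \in Et -> E e.1 e.2) ->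
  is_path (set_rel Et) p x y -> active (set_rel Et) Z p ->
  is_path E p x y /\ active E Z p.
Proof.
move=> acy sub [sz hd lt un adjp] act.
have subE : forall u v, set_rel Et u v -> E u v by move=> u v /sub.
split.
  split=> // l r a b /adjp [h|h]; [left|right]; exact: subE.
move=> l r a b c hp.
have ab : adj (set_rel Et) a b by apply: (adjp l (c :: r)).
have bc : adj (set_rel Et) b c.
  by apply: (adjp (rcons l a) r); rewrite hp cat_rcons.
have [h1 h2] := act l r a b c hp.
split.
- case=> Eab Ecb.
  have col : collider (set_rel Et) a b c.
    split.
    + case: ab => // /subE Eba; case: (acy _ _ Eab); exact: rt_step.
    + case: bc => // /subE Ebc; case: (acy _ _ Ecb); exact: rt_step.
  case: (h1 col) => [//|[z [Zz dz]]]; first by left.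
  by right; exists z; split => //; apply: crt_mono dz.
- move=> nc; apply: h2 => [[e1 e2]]; apply: nc; split; exact: subE.
Qed.

Lemma mem3 (p l r : seq V) a b c : p = l ++ a :: b :: c :: r ->
  [/\ a \in p, b \in p & c \in p].
Proof. by move=> ->; rewrite !(mem_cat, inE) !eqxx !orbT. Qed.

Lemma mem2 (p l r : seq V) a b : p = l ++ a :: b :: r -> a \in p /\ b \in p.
Proof. by move=> ->; rewrite !(mem_cat, inE) !eqxx !orbT. Qed.

Lemma build E Z p x y : is_path E p x y -> active E Z p ->
  exists N Et, [/\ collider_tree E x y N Et p, active (set_rel Et) Z p &
                   forall e, e \in Et -> E e.1 e.2].
Proof.
move=> [sz hd lt un adjp] act.
pose inN w := w \in p \/ exists l r a b c z, [/\ p = l ++ a :: b :: c :: r,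
   collider E a b c, z \in Z, desc E b w & desc E w z].
pose N : {set V} := [set w | pb (inN w)].
pose Et : {set V * V} := [set e | pb (E e.1 e.2) && (e.1 \in N) && (e.2 \in N)].
have inNp : forall w, w \in p -> w \in N by move=> w wp; rewrite inE; apply/pbP; left.
have EtE : forall u v, E u v -> u \in N -> v \in N -> set_rel Et u v.
  move=> u v Euv; rewrite /set_rel !inE /= => -> ->; rewrite !andbT; exact/pbP.
have EtP : forall e, e \in Et -> [/\ E e.1 e.2, e.1 \in N & e.2 \in N].
  by move=> e; rewrite [e \in Et]inE => /andP [/andP [/pbP h1 h2] h3].
have key : forall l r a b c z, p = l ++ a :: b :: c :: r -> collider E a b c ->
    z \in Z -> forall w, clos_refl_trans V E b w -> clos_refl_trans V E w z ->
    clos_refl_trans V (set_rel Et) b w.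
  move=> l r a b c z hp col zZ w /clos_rt_rtn1_iff.
  elim => [|w1 w2 E12 Hn IH] hz; first exact: rt_refl.
  have hz1 : clos_refl_trans V E w1 z by apply: rt_trans hz; apply: rt_step.
  have bw1 : clos_refl_trans V E b w1 by apply/clos_rt_rtn1_iff.
  have bw2 : clos_refl_trans V E b w2 by apply: rt_trans bw1 (rt_step _ _ _ _ E12).
  apply: rt_trans (IH hz1) _; apply: rt_step; apply: EtE => //;
    rewrite inE; apply/pbP; right; by exists l, r, a, b, c, z; split.
have pathEt : is_path (set_rel Et) p x y.
  split=> // l r a b hp.
  have [ap bp] := mem2 hp.
  case: (adjp _ _ _ _ hp) => h; [left|right]; apply: EtE => //; exact: inNp.
exists N, Et; split.
- split => //.
  + move=> w; rewrite inE => /pbP [wp1 wp|[l [r [a [b [c [z [hp col zZ bw wz]]]]]]] wp]; first by rewrite wp1 in wp.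
    have [ap bp cp] := mem3 hp.
    exists l, r, a, b, c; split => //.
    * by case: col => h1 h2; split; apply: EtE => //; apply: inNp.
    * exact: (key l r a b c z).
- move=> l r a b c hp.
  have [ap bp cp] := mem3 hp.
  have [h1 h2] := act l r a b c hp.
  split.
  + case=> e1 e2.
    have col : collider E a b c by split; [case: (EtP (a, b) e1)|case: (EtP (c, b) e2)].
    case: (h1 col) => [|[z [zZ dz]]]; first by left.
    right; exists z; split => //; apply: (key l r a b c z) => //; exact: rt_refl.
  + move=> nc; apply: h2 => [[e1 e2]]; apply: nc; split; apply: EtE => //; exact: inNp.
- by move=> e /EtP [].
Qed.

Lemma der_CtrInd U P Z : der U (Ctr (Ind P Z)) ->
  exists x' y' H N Et p, [/\ P = [set x'; y'], acyclic H, collider_tree H x' y' N Et p,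
     active (set_rel Et) Z p & forall e, e \in Et -> U (Arr e.1 e.2)].
Proof.
move E0: (Ctr (Ind P Z)) => q D; case: D E0 => [b _ _ //| h body R Hb E0].
case: R Hb E0 => //.
- move=> x y a b _ Ina _ _ _ [ea]; move: Ina; rewrite -ea /=.
  by case=> [//|[//|[//|//]]].
- move=> x y Z0 H N Et p nxy xZ yZ acy ct act Hb [eP eZ].
  exists x, y, H, N, Et, p; split => //; first by rewrite eZ.
  move=> e eEt; apply: der_Asm; apply: Hb.
  by apply: (In_map2 (fun e => Asm (Arr e.1 e.2))); apply/InP; rewrite mem_enum.
Qed.

Lemma tree_contra S x y Z x' y' H N Et p :
  dsep (GS S) x y Z -> acyclic (GS S) -> x != y -> [set x'; y'] = [set x; y] ->
  collider_tree H x' y' N Et p -> active (set_rel Et) Z p ->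
  (forall e, e \in Et -> S (Arr e.1 e.2)) -> False.
Proof.
move=> ds acy nxy exy [_ hp _ _] act sub.
have [hp' act'] := transfer acy sub hp act.
case: (pair_eq exy nxy) => [[ex ey]|[ex ey]]; rewrite ex ey in hp' act'.
- by apply: ds; exists p.
- by apply: (dsep_sym ds); exists p.
Qed.
End S.

Theorem proposition2 (V : finType) (S : asm V -> Prop) :
  preferred S \/ stable S ->
  forall (x y : V) (Z : {set V}), x != y -> x \notin Z -> y \notin Z ->
    (S (Ind [set x; y] Z) <-> dsep (GS S) x y Z).
Proof.
move=> hS x y Z nxy xZ yZ.
have adm : admissible S by case: hS => [[[]]|[]].
case: (adm) => asS cfS _.
have acy := GS_acyclic asS cfS.
have isI : is_asm (Ind [set x; y] Z).
  split; first by rewrite cards2 nxy.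
  rewrite disjoints_subset; apply/subsetP => w; rewrite !inE => /orP [/eqP->|/eqP->] //.
split.
- move=> SI [p [hp ha]].
  have [N [Et [ct act sub]]] := build hp ha.
  apply: cfS; exists (Ind [set x; y] Z); split => //.
  apply: (der_rule (r_ind nxy xZ yZ acy ct act)) => b Hb.
  case: (In_map Hb) => e He ->; apply: der_asm.
  + by apply: asS; apply: sub; move/InP: He; rewrite mem_enum.
  + by apply: sub; move/InP: He; rewrite mem_enum.
- move=> ds.
  case: hS => [pS | [_ st]].
  + have [[_ cS] _] := pS.
    apply: (cS (fun b => b = Ind [set x; y] Z)) => //; first by move=> a ->.
    move=> U asU [b [-> D]].
    have [x' [y' [H [N [Et [p [exy _ ct act sub]]]]]]] := der_CtrInd D.
    case: (classic (forall e, e \in Et -> S (Arr e.1 e.2))) => [all|].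
      by case: (tree_contra ds acy nxy (esym exy) ct act all).
    move/not_all_ex_not => [e He]; case: (imply_to_and _ _ He) => eEt nSe.
    have Ue := sub e eEt.
    have ne : e.1 != e.2 by apply/eqP; apply: (asU _ Ue).
    exists (Arr e.1 e.2); split => //.
    case: (trio pS ne) => [//|h|h].
    * apply: (@der_rule _ _ _ [:: Asm (Arr e.2 e.1)]).
        apply: (r_excl ne); [by left|by right; left|by case=> e1 e2; rewrite e1 eqxx in ne].
      move=> bb [<-|//]; apply: der_asm => //; apply: asS h.
    * apply: (@der_rule _ _ _ [:: Asm (Noe [set e.1; e.2])]).
        apply: (r_excl ne); [by left|by right; right; left|by []].
      move=> bb [<-|//]; apply: der_asm => //; apply: asS h.
  + apply: NNPP => nI.
    have [b [-> D]] := st _ isI nI.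
    have [x' [y' [H [N [Et [p [exy _ ct act sub]]]]]]] := der_CtrInd D.
    exact: (tree_contra ds acy nxy (esym exy) ct act sub).
Qed.
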